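(* For every integer $d\ge 1$, the class of finite unit ball graphs in $\mathbb{R}^d$ has asymptotic dimension at most $d$.
   Context: A unit ball graph in $\mathbb{R}^d$ is a graph whose vertices can be mapped to points of $\mathbb{R}^d$ such that two vertices are adjacent if and only if the corresponding points are at Euclidean distance at most $1$. Graphs are metric spaces with the shortest-path distance. For a metric space $(X,d)$, a family $\mathcal U$ of subsets is $D$-bounded if every member has diameter at most $D$, and $r$-disjoint if points in different members are at distance $>r$. A function $D:\mathbb{R}^+\to\mathbb{R}^+$ is an $n$-dimensional control function for $X$ if for every $r>0$ there is a cover $\mathcal U=\mathcal U_1\cup\dots\cup\mathcal U_{n+1}$ of $X$ with each $\mathcal U_i$ $r$-disjoint and each member $D(r)$-bounded; a class has asymptotic dimension at most $n$ if one such function works for all its members. *)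

(* Defs.v *)
From HB Require Import structures.
From mathcomp Require Import all_boot all_order all_algebra.
From mathcomp Require Import reals.
Set Implicit Arguments. Unset Strict Implicit. Unset Printing Implicit Defensive.
Import Order.TTheory GRing.Theory Num.Theory.
Local Open Scope ring_scope.

Definition eucl_dist (R : realType) (d : nat) (p q : 'rV[R]_d) : R :=
  Num.sqrt (\sum_(i < d) (p ord0 i - q ord0 i) ^+ 2).

Definition unit_ball_graph (R : realType) (d : nat) (T : finType) (e : rel T) :=
  exists f : T -> 'rV[R]_d,
    forall x y : T, x != y -> (e x y <-> eucl_dist (f x) (f y) <= 1).

(* Shortest-path distance, encoded by: "dist(x,y) <= k" iff there is a
   walk of at most k edges from x to y. (Distance is +oo between different
   components.) *)
Definition gdist_le (T : finType) (e : rel T) (x y : T) (k : nat) : Prop :=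
  exists p : seq T, [/\ path e x p, last x p = y & (size p <= k)%N].

Definition gdist_leR (R : realType) (T : finType) (e : rel T) (x y : T) (r : R) : Prop :=
  exists k : nat, k%:R <= r /\ gdist_le e x y k.

Definition bounded_family (R : realType) (T : finType) (e : rel T)
    (F : {set {set T}}) (D : R) : Prop :=
  forall U, U \in F -> forall x y, x \in U -> y \in U -> gdist_leR e x y D.

Definition disjoint_family (R : realType) (T : finType) (e : rel T)
    (F : {set {set T}}) (r : R) : Prop :=
  forall U V, U \in F -> V \in F -> U != V ->
    forall x y, x \in U -> y \in V -> ~ gdist_leR e x y r.

Definition control_function (R : realType) (n : nat) (T : finType) (e : rel T)
    (D : R -> R) : Prop :=
  forall r : R, 0 < r ->
    exists F : 'I_n.+1 -> {set {set T}},
      [/\ forall x : T, exists i : 'I_n.+1, exists2 U, U \in F i & x \in U,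
          forall i, disjoint_family e (F i) r
        & forall i, bounded_family e (F i) (D r)].

(* Main.v *)
Require Import Defs.
From HB Require Import structures.
From mathcomp Require Import all_boot all_order all_algebra.
From mathcomp Require Import reals.
From mathcomp Require Import boolp zify ring lra.
Import Order.TTheory GRing.Theory Num.Theory.
Local Open Scope ring_scope.
Section Walks.
Variables (T : finType) (e : rel T).

Lemma dle_mono x y a b : gdist_le e x y a -> (a <= b)%N -> gdist_le e x y b.
Proof. by move=> [p [hp hl hs]] hab; exists p; split=> //; apply: leq_trans hab. Qed.

Lemma dle_refl x : gdist_le e x x 0.
Proof. by exists [::]. Qed.

Lemma dle_edge x y : e x y -> gdist_le e x y 1.
Proof. by move=> hxy; exists [:: y]; rewrite /= hxy. Qed.

Lemma dle_trans x y z a b :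
  gdist_le e x y a -> gdist_le e y z b -> gdist_le e x z (a + b).
Proof.
move=> [p [hp hl hs]] [q [hq hl' hs']]; exists (p ++ q).
by rewrite cat_path last_cat hl hp hq size_cat leq_add.
Qed.

Lemma dle_sym x y k : (forall a b, e a b -> e b a) ->
  gdist_le e x y k -> gdist_le e y x k.
Proof.
move=> esym [p [hp hl hs]]; exists (rev (belast x p)); split.
- rewrite -hl rev_path; apply: sub_path hp => a b /=; exact: esym.
- case: p hp hl hs => [|z p] /= _ <- // _.
  by rewrite rev_cons last_rcons.
- by rewrite size_rev size_belast.
Qed.
End Walks.
Arguments dle_mono {T e x y a b}.
Arguments dle_trans {T e x y z a b}.
Arguments dle_sym {T e x y k}.
Arguments dle_refl {T e}.
Arguments dle_edge {T e x y}.

Lemma lastocc (A : Type) (Q : pred A) (s : seq A) : has Q s ->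
  exists s1 z s2, [/\ s = s1 ++ z :: s2, Q z & ~~ has Q s2].
Proof.
elim: s => [|a s IH] //= h.
case hs: (has Q s).
  by case: (IH hs) => s1 [z [s2 [-> hz hn]]]; exists (a :: s1), z, s2.
by rewrite hs orbF in h; exists [::], a, s; rewrite hs.
Qed.

Lemma walk_bound (T : finType) (e rl : rel T) (X : eqType) (cell : T -> X)
  (P : pred T) (N : nat) :
  (forall x y, rl x y -> gdist_le e x y N) ->
  (forall x y, P x -> P y -> cell x = cell y -> gdist_le e x y 1) ->
  forall n x p, path rl x p -> all P (x :: p) ->
  (size (undup (map cell (x :: p))) <= n)%N ->
  gdist_le e x (last x p) (n * N.+1).
Proof.
move=> H1 H2; elim=> [|n IH] x p hp hP hs.
  have : cell x \in undup (map cell (x :: p)) by rewrite mem_undup mem_head.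
  by move: hs; rewrite leqn0 size_eq0 => /eqP ->.
have hQ : has (fun z => cell z == cell x) (x :: p) by rewrite /= eqxx.
case: (@lastocc _ _ _ hQ) => s1 [z [s2 [hs12 /eqP hz hn]]].
have hzs : z \in x :: p by rewrite hs12 mem_cat mem_head orbT.
have hPz : P z by move/allP: hP; apply.
have hxz : gdist_le e x z 1.
  by apply: H2 => //; move: hP => /= /andP [].
have [hpz hlast] : path rl z s2 /\ last x p = last z s2.
  case: s1 hs12 => [|a s1] /= [hxa hps].
    by rewrite -hxa -hps.
  rewrite hps in hp *; move: hp; rewrite cat_path last_cat /=.
  by case/and3P.
rewrite hlast.
case: s2 hpz hn hlast hs12 => [|z2 s3] hpz hn hlast hs12.
  by apply: dle_mono hxz _; rewrite mulSn leq_addr.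
move: hpz => /= /andP [hzz2 hp3].
have hP3 : all P (z2 :: s3).
  apply/allP => w hw; move/allP: hP; apply.
  by rewrite hs12 mem_cat /= inE hw !orbT.
have hs3 : (size (undup (map cell (z2 :: s3))) <= n)%N.
  have hu : uniq (cell x :: undup (map cell (z2 :: s3))).
    rewrite cons_uniq undup_uniq andbT mem_undup.
    apply/negP => /mapP [w hw hwx]; move/hasP: hn; apply; exists w => //.
    by rewrite hwx.
  suff hsub : {subset cell x :: undup (map cell (z2 :: s3)) <= undup (map cell (x :: p))}.
    have := uniq_leq_size hu hsub => /= h; rewrite -ltnS; exact: leq_trans h hs.
  move=> w; rewrite inE mem_undup => /orP [/eqP -> | hw].
    by rewrite mem_undup map_f // mem_head.
  rewrite mem_undup; move/mapP: hw => [v hv ->]; apply: map_f.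
  by rewrite hs12 mem_cat /= inE hv !orbT.
have := IH _ _ hp3 hP3 hs3.
have h12 := dle_trans hxz (H1 _ _ hzz2).
move=> h3; have := dle_trans h12 h3; move/dle_mono; apply.
by rewrite mulSn add1n addSn.
Qed.
Section Geo.
Variables (R : realType) (d : nat) (T : finType) (e : rel T)
  (f : T -> 'rV[R]_d).
Hypothesis hf : forall x y, x != y -> (e x y <-> eucl_dist (f x) (f y) <= 1).
Hypothesis hd : (1 <= d)%N.

Local Notation c x i := (f x ord0 i).

Lemma esym a b : e a b -> e b a.
Proof.
case: (eqVneq a b) => [-> //|hne].
have hne' : b != a by rewrite eq_sym.
move/(hf _ _ hne) => h; apply/(hf _ _ hne').
suff -> : eucl_dist (f b) (f a) = eucl_dist (f a) (f b) by [].
rewrite /eucl_dist; congr Num.sqrt; apply: eq_bigr => i _.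
by rewrite -sqrrN opprB.
Qed.

Lemma edge_coord a b i : e a b -> `|c a i - c b i| <= 1.
Proof.
case: (eqVneq a b) => [-> _|hne]; first by rewrite subrr normr0 ler01.
move/(hf _ _ hne); rewrite /eucl_dist => h.
have hS : \sum_j (c a j - c b j) ^+ 2 <= 1.
  by rewrite -(@ler_sqrt _ _ 1) ?ler01 // sqrtr1.
have hi : (c a i - c b i) ^+ 2 <= 1.
  apply: le_trans hS; rewrite (bigD1 i) //= lerDl sumr_ge0 // => j _.
  exact: sqr_ge0.
rewrite ler_norml; apply/andP; split; nra.
Qed.

Lemma walk_coord a b n i : gdist_le e a b n -> `|c a i - c b i| <= n%:R.
Proof.
case=> p [hp <- hs]; apply: (@le_trans _ _ (size p)%:R); last by rewrite ler_nat.
elim: p a hp {hs} => [|y p IH] a /=; first by rewrite subrr normr0.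
move/andP => [hay hp]; apply: le_trans (ler_distD (c y i) _ _) _.
by rewrite -[(size p).+1]add1n natrD lerD // ?edge_coord // IH.
Qed.

Variable N : nat.
Hypothesis hN : (0 < N)%N.

Definition sS := (4 * N)%N.
Definition LL := (d.+1 * sS)%N.
Definition uu (k : 'I_d.+1) a i : R := c a i + (k * sS)%:R.
Definition bad k a i := exists j : int, `|uu k a i - j%:~R * LL%:R| < N%:R.
Definition good k a := forall i, ~ bad k a i.
Definition QQ k a i : int := Num.floor (uu k a i / LL%:R).

Lemma LL_gt0 : (0 < LL)%N.
Proof. by rewrite /LL /sS muln_gt0 /= muln_gt0. Qed.

Lemma LLR_gt0 : 0 < LL%:R :> R.
Proof. by rewrite ltr0n LL_gt0. Qed.

Lemma Q_bounds k a i :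
  (QQ k a i)%:~R * LL%:R <= uu k a i < (QQ k a i)%:~R * LL%:R + LL%:R.
Proof.
have := floor_itv (uu k a i / LL%:R); rewrite -/(QQ k a i).
case/andP => h1 h2; apply/andP; split.
  by rewrite -ler_pdivlMr // LLR_gt0.
by move: h2; rewrite ltr_pdivrMr ?LLR_gt0 // intrD mulrDl mul1r.
Qed.

Lemma sameQ k a b i : good k a -> good k b -> gdist_le e a b N ->
  QQ k a i = QQ k b i.
Proof.
move=> ga gb hab.
have := walk_coord _ _ _ i hab; rewrite ler_norml => /andP [d1 d2].
have := Q_bounds k a i; have := Q_bounds k b i.
move=> /andP [b1 b2] /andP [a1 a2].
case: (ltgtP (QQ k a i) (QQ k b i)) => // hlt; exfalso.
- apply: (gb i); exists (QQ k b i).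
  have : (QQ k a i + 1)%:~R <= (QQ k b i)%:~R :> R by rewrite ler_int lezD1.
  rewrite intrD => h; have h' := ler_wpM2r (ltW LLR_gt0) h.
  move: a1 a2 b1 b2 d1 d2 h'; rewrite /uu ltr_norml => *; apply/andP; split; nra.
- apply: (ga i); exists (QQ k a i).
  have : (QQ k b i + 1)%:~R <= (QQ k a i)%:~R :> R by rewrite ler_int lezD1.
  rewrite intrD => h; have h' := ler_wpM2r (ltW LLR_gt0) h.
  move: a1 a2 b1 b2 d1 d2 h'; rewrite /uu ltr_norml => *; apply/andP; split; nra.
Qed.

Lemma bad_uniq k k' a i : bad k a i -> bad k' a i -> k = k'.
Proof.
move=> [j hj] [j' hj'].
pose A : int := (k%:Z - k'%:Z - (j - j') * (d.+1)%:Z)%R.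
have hA : A%:~R * (4 * N)%:R =
    (uu k a i - j%:~R * LL%:R) - (uu k' a i - j'%:~R * LL%:R) :> R.
  rewrite /A /uu /LL /sS !intrD !intrN !intrM !natrM -!pmulrn.
  ring.
have hlt : `|A%:~R : R| * (4 * N)%:R < 2 * N%:R.
  rewrite -normr_nat -normrM hA; apply: le_lt_trans (ler_normB _ _) _.
  by rewrite mulr2n mulrDl mul1r ltrD.
have hN' : 0 < N%:R :> R by rewrite ltr0n.
have hA1 : `|A%:~R : R| < 1.
  move: hlt; rewrite natrM => hlt.
  have h0 : 0 <= `|A%:~R : R| by [].
  nra.
have hA0 : A = 0.
  move: hA1; rewrite -intr_norm -[1]/(1%:~R) ltr_int => h; lia.
apply: val_inj => /=.
have hk := ltn_ord k; have hk' := ltn_ord k'.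
move: hA0; rewrite /A; set m := (j - j')%R => hm.
case: (ltgtP m 0) => hm0.
- have hm1 : (m <= -1)%R by lia.
  have : (m * (d.+1)%:Z <= -1 * (d.+1)%:Z)%R by rewrite ler_wpM2r.
  rewrite mulN1r => ?; lia.
- have hm1 : (1 <= m)%R by lia.
  have : (1 * (d.+1)%:Z <= m * (d.+1)%:Z)%R by rewrite ler_wpM2r.
  rewrite mul1r => ?; lia.
- move: hm; rewrite hm0 mul0r subr0; lia.
Qed.

Definition badb k a i := `[< bad k a i >].

Lemma exists_good a : exists k, good k a.
Proof.
pose h (i : 'I_d) : 'I_d.+1 := odflt ord0 [pick k | badb k a i].
pose B := [set k | [exists i, badb k a i]].
have hB : B \subset [set h i | i in 'I_d].
  apply/subsetP => k; rewrite inE => /existsP [i hi].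
  apply/imsetP; exists i => //; rewrite /h; case: pickP => [k' hk' | /(_ k)].
    by apply: (@bad_uniq _ _ a i); apply/asboolP.
  by rewrite hi.
have hcB : (#|B| <= d)%N.
  apply: leq_trans (subset_leq_card hB) _.
  by apply: leq_trans (leq_imset_card _ _) _; rewrite card_ord.
have : ~~ ([set: 'I_d.+1] \subset B).
  apply/negP => /subset_leq_card; rewrite cardsT card_ord => hh.
  by have := leq_trans hh hcB; rewrite ltnn.
case/subsetPn => k _ /negP hk; exists k => i hi; apply: hk.
by rewrite inE; apply/existsP; exists i; apply/asboolP.
Qed.

Definition cell k a : {ffun 'I_d -> 'I_(d * LL).+1} :=
  [ffun i => inord (absz (Num.floor (d%:R * uu k a i) - (d * LL)%:Z * QQ k a i)%R)].

Lemma cell_range k a i :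
  (0 <= Num.floor (d%:R * uu k a i) - (d * LL)%:Z * QQ k a i <= (d * LL)%:Z)%R.
Proof.
have /andP [h1 h2] := Q_bounds k a i.
have hdp : 0 < d%:R :> R by rewrite ltr0n.
have g1 : ((d * LL)%:Z * QQ k a i <= Num.floor (d%:R * uu k a i))%R.
  rewrite floor_ge_int intrM -pmulrn natrM.
  have := ler_wpM2l (ltW hdp) h1; lra.
have g2 : (Num.floor (d%:R * uu k a i) < (d * LL)%:Z * QQ k a i + (d * LL)%:Z)%R.
  rewrite floor_lt_int intrD intrM -!pmulrn natrM.
  have := h2; rewrite -(ltr_pM2l hdp); lra.
apply/andP; split; lia.
Qed.

Lemma cell_close k a b : (forall i, QQ k a i = QQ k b i) ->
  cell k a = cell k b -> gdist_le e a b 1.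
Proof.
move=> hQ hc.
have hi : forall i, `|d%:R * (c a i - c b i)| < 1.
  move=> i.
  have := congr1 (fun g : {ffun _ -> _} => val (g i)) hc; rewrite /cell /= !ffunE /=.
  have /andP [ra1 ra2] := cell_range k a i.
  have /andP [rb1 rb2] := cell_range k b i.
  rewrite inordK; last by lia.
  rewrite inordK; last by lia.
  move=> habs; have hq := hQ i.
  have hF : Num.floor (d%:R * uu k a i) = Num.floor (d%:R * uu k b i) by lia.
  have := floor_itv (d%:R * uu k a i); have := floor_itv (d%:R * uu k b i).
  rewrite hF /uu => /andP [f1 f2] /andP [f3 f4].
  rewrite ltr_norml; apply/andP; split; lra.
have hsum : \sum_i (c a i - c b i) ^+ 2 <= 1.
  have hdp : 0 < d%:R :> R by rewrite ltr0n.
  rewrite -(ler_pM2l hdp) mulr1 mulr_sumr.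
  apply: le_trans (_ : \sum_(i < d) (1 : R) <= _); last by rewrite sumr_const card_ord.
  apply: ler_sum => i _.
  have := hi i; rewrite ltr_norml => /andP [h1 h2].
  have hd1 : 1 <= d%:R :> R by rewrite ler1n.
  have hsq : 0 <= (c a i - c b i) ^+ 2 by exact: sqr_ge0.
  nra.
have hE : eucl_dist (f a) (f b) <= 1.
  by rewrite /eucl_dist -sqrtr1 ler_wsqrtr.
case: (eqVneq a b) => [-> | hne]; first exact: (dle_mono (dle_refl _)).
exact/dle_edge/(hf _ _ hne).
Qed.

End Geo.
Arguments esym {R d T e f} hf a b.
Arguments sameQ {R d T e f} hf {N} hN {k a b} i.
Arguments exists_good {R d T} f hd {N} hN a.
Arguments cell_close {R d T e f} hf hd {N} hN {k a b}.
Theorem theorem6p3 (R : realType) (d : nat) : (1 <= d)%N ->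
  exists D : R -> R,
    (forall r : R, 0 < r -> 0 < D r) /\
    forall (T : finType) (e : rel T),
      @unit_ball_graph R d T e -> @control_function R d T e D.
Proof.
move=> hd.
pose NN (r : R) := (Num.truncn r).+1.
pose Dn (r : R) := (((d * LL d (NN r)).+1 ^ d) * (NN r).+1)%N.
exists (fun r => (Dn r)%:R); split.
  by move=> r _; rewrite ltr0n muln_gt0 expn_gt0.
move=> T e [f hf] r hr.
pose N := NN r.
have hN : (0 < N)%N by [].
pose rl (k : 'I_d.+1) : rel T := fun x y =>
  `[< good R d T f N k x /\ good R d T f N k y /\ gdist_le e x y N >].
have rlsym : forall k, symmetric (rl k).
  move=> k x y; apply/asboolP/asboolP => [[gx [gy h]] | [gy [gx h]]];
    (split; [done | split; [done | exact: (dle_sym (esym hf) h)]]).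
have csym k := sym_connect_sym (rlsym k).
have gc : forall k a b, good R d T f N k a -> connect (rl k) a b ->
    good R d T f N k b.
  move=> k a b ga /connectP [p hp ->].
  case/lastP: p hp => [|p z] //.
  by rewrite rcons_path last_rcons => /andP [_ /asboolP [_ [gz _]]].
pose cls k x := [set y | connect (rl k) x y].
pose F k := [set cls k x | x in [set x | `[< good R d T f N k x >]]].
exists F; split.
- move=> x; case: (exists_good f hd hN x) => k hk.
  exists k; exists (cls k x); last by rewrite inE connect0.
  by apply/imsetP; exists x => //; rewrite inE; apply/asboolP.
- move=> k U V /imsetP [x1 hx1 ->] /imsetP [x2 hx2 ->] hne x y.
  rewrite !inE => hx hy [n [hn hdn]].
  move: hx1 hx2; rewrite !inE => /asboolP hx1 /asboolP hx2.
  have hnN : gdist_le e x y N.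
    apply: dle_mono hdn _.
    have : n%:R < N%:R :> R by apply: le_lt_trans hn (truncnS_gt r).
    by rewrite ltr_nat => /ltnW.
  have hxy : rl k x y.
    by apply/asboolP; split; [exact: gc hx1 hx | split; [exact: gc hx2 hy | ]].
  have c12 : connect (rl k) x1 x2.
    apply: connect_trans hx _; apply: connect_trans (connect1 hxy) _.
    by rewrite csym.
  move/negP: hne; apply; apply/eqP/setP => w; rewrite !inE.
  apply/idP/idP => h.
    by apply: connect_trans h; rewrite csym.
  exact: connect_trans c12 h.
- move=> k U /imsetP [x0 hx0 ->] x y; rewrite !inE => hx hy.
  move: hx0; rewrite inE => /asboolP hx0.
  have gx := gc _ _ _ hx0 hx.
  have : connect (rl k) x y by apply: connect_trans hy; rewrite csym.
  case/connectP => p hp ->.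
  exists (Dn r); split; first by [].
  have hall : forall q a, path (rl k) a q ->
      (forall i, QQ R d T f N k a i = QQ R d T f N k x i) ->
      all (fun z => [forall i, QQ R d T f N k z i == QQ R d T f N k x i]) (a :: q).
    elim=> [|z q IH] a /=.
      by move=> _ h; rewrite andbT; apply/fintype.forallP => i; apply/eqP.
    move=> /andP [haz hq] h; apply/andP; split.
      by apply/fintype.forallP => i; apply/eqP.
    apply: IH => // i; rewrite -h.
    move/asboolP: haz => [ga [gz hz]].
    by rewrite (sameQ hf hN i ga gz hz).
  apply: (@walk_bound T e (rl k) _ (cell R d T f N k)
    (fun z => [forall i, QQ R d T f N k z i == QQ R d T f N k x i]) N) => //.
  + by move=> a b /asboolP [_ [_ h]].
  + move=> a b /fintype.forallP ha /fintype.forallP hb hc.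
    apply: (cell_close hf hd hN _ hc) => i.
    by rewrite (eqP (ha i)) (eqP (hb i)).
  + by apply: hall.
  + have := max_card (mem (undup (map (cell R d T f N k) (x :: p)))).
    rewrite card_ffun !card_ord.
    by move/card_uniqP: (undup_uniq (map (cell R d T f N k) (x :: p))) => ->.
Qed.
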